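(* Let $\lambda>1$ be fixed and let $D_U,D_V$ be the $n\times n$ symmetric matrices $D_U=W_2^{-1}-W_2^{-1}B-B^TW_2^{-1}+B^TW_2^{-1}B$, $D_V=W_1^{-1}-A^TW_1^{-1}-W_1^{-1}A$, where $A=K_V^0(I+\Sigma_2)^{-1}$, $W_1=K_V^0-K_V^0(I+\Sigma_2)^{-1}K_V^0$, $B=K_U^0(K_U^0+\Sigma_1)^{-1}$, $W_2=K_U^0-K_U^0(K_U^0+\Sigma_1)^{-1}K_U^0$ for given symmetric positive definite $K_U^0,K_V^0,\Sigma_1,\Sigma_2$ with $K_U^0+K_V^0=I$. Let $D_U-\lambda D_V=H\,\mathrm{diag}(b_1,\dots,b_n)\,H^T$ be an eigen-decomposition with $H$ orthogonal. Then the optimal solution of $$\max_{K_U}\ -\mathrm{tr}(D_UK_U)-\lambda\,\mathrm{tr}(D_V(I-K_U))+\ln|K_U|+\lambda\ln|I-K_U|\quad\text{s.t. } 0\prec K_U\prec I$$ is $K_U=H\,\mathrm{diag}(a_1,\dots,a_n)\,H^T$, where for $i=1,\dots,n$, $$a_i=\begin{cases}\dfrac{1}{1+\lambda}, & b_i=0,\\[2mm] \dfrac{(\lambda+1+b_i)-\sqrt{(\lambda+1+b_i)^2-4b_i}}{2b_i}, & b_i\neq0.\end{cases}$$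
   Context: $|M|$ denotes the determinant; $0\prec K_U\prec I$ means $K_U$ and $I-K_U$ are positive definite. *)

(* Defs.v *)
From HB Require Import structures.
From mathcomp Require Import all_boot all_order all_algebra.
From mathcomp Require Import all_classical all_reals all_analysis.
Set Implicit Arguments. Unset Strict Implicit. Unset Printing Implicit Defensive.
Import Order.TTheory GRing.Theory Num.Theory.
Local Open Scope ring_scope.

Definition posdef (R : realType) (n : nat) (M : 'M[R]_n) : Prop :=
  M^T = M /\ forall v : 'cV[R]_n, v != 0 -> 0 < (v^T *m M *m v) 0 0.

Definition feasible (R : realType) (n : nat) (K : 'M[R]_n) : Prop :=
  posdef K /\ posdef (1%:M - K).

Definition objective (R : realType) (n : nat) (lam : R) (DU DV K : 'M[R]_n) : R :=
  - \tr (DU *m K) - lam * \tr (DV *m (1%:M - K))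
  + ln (\det K) + lam * ln (\det (1%:M - K)).

Definition a_coef (R : realType) (lam b : R) : R :=
  if b == 0 then 1 / (1 + lam)
  else ((lam + 1 + b) - Num.sqrt ((lam + 1 + b) ^+ 2 - 4 * b)) / (2 * b).

(* Main.v *)
Require Import Defs.
From HB Require Import structures.
From mathcomp Require Import all_boot all_order all_algebra.
From mathcomp Require Import all_classical all_reals all_analysis.
From mathcomp Require Import ring lra.
Import Order.TTheory GRing.Theory Num.Theory.
Local Open Scope ring_scope.

Lemma posdef_diag {R : realType} {n} {P : 'M[R]_n} : posdef P -> forall i, 0 < P i i.
Proof.
move=> [_ HP] i.
have := HP (delta_mx i 0).
rewrite trmx_delta -rowE -colE !mxE.
apply.
apply/eqP => /matrixP /(_ i 0); rewrite !mxE !eqxx /=.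
by move/eqP; rewrite oner_eq0.
Qed.

Lemma lift0_rshift n (i : 'I_n) : lift ord0 i = rshift 1 i :> 'I_(1 + n).
Proof. by apply: val_inj. Qed.

Lemma hadamard {R : realType} {n} {P : 'M[R]_n} : posdef P ->
  [/\ 0 < \det P, \det P <= \prod_i P i i &
   (\det P < \prod_i P i i \/ forall i j, i != j -> P i j = 0)].
Proof.
elim: n P => [|n IH] P PD.
  rewrite det_mx00 big_ord0; split; [exact: ltr01 | exact: lexx | by right => -[]].
have PT : P^T = P := PD.1.
set c := P ord0 ord0.
have c0 : 0 < c := posdef_diag PD ord0.
pose Pb : 'M[R]_(1 + n) := P.
pose u : 'M[R]_(1,n) := ursubmx Pb.
pose Q : 'M[R]_n := drsubmx Pb.
have Pblk : Pb = block_mx c%:M u u^T Q.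
  rewrite -[Pb in LHS]submxK; congr block_mx.
    apply/matrixP => i j; rewrite !ord1 !mxE eqxx mulr1n.
    by congr (P _ _); apply: val_inj.
  by rewrite /u trmx_ursub /Pb PT.
pose S := Q - c^-1 *: (u^T *m u).
pose L : 'M[R]_(1+n) := block_mx 1%:M 0 (- c^-1 *: u^T) 1%:M.
have cn0 : c != 0 by rewrite gt_eqF.
have LPL : L *m Pb *m L^T = block_mx c%:M 0 0 S.
  rewrite Pblk /L tr_block_mx !mulmx_block.
  rewrite ?mul1mx ?mul0mx ?addr0 ?add0r ?trmx1 ?trmx0 ?mulmx1 ?mulmx0 ?addr0.
  rewrite ?linearZ /= ?linearN /= ?trmxK.
  have e1 : - c^-1 *: u^T *m c%:M + u^T = 0.
    by rewrite mul_mx_scalar scalerA mulrN mulfV // scaleN1r addNr.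
  rewrite e1 mul0mx scaler0 add0r mul_scalar_mx scalerA mulNr mulVf //.
  rewrite scaleN1r addNr; congr block_mx.
  by rewrite /S -scalemxAl scaleNr addrC.
have detL : \det L = 1 by rewrite det_lblock !det1 mulr1.
have detP : \det P = c * \det S.
  have := congr1 determinant LPL.
  by rewrite !det_mulmx det_tr detL det_ublock det_scalar1 mul1r mulr1.
have SPD : posdef S.
  split.
    rewrite /S linearB /= linearZ /= trmx_mul trmxK /Q trmx_drsub.
    by rewrite /Pb PT.
  move=> w w0.
  have key : forall x : 'cV_(1+n),
    (x^T *m (L *m Pb *m L^T) *m x) = ((L^T*m x)^T *m P *m (L^T *m x)).
    by move=> x; rewrite trmx_mul trmxK !mulmxA.
  have := PD.2 (L^T *m col_mx 0 w).
  rewrite -key LPL [(col_mx 0 w)^T]tr_col_mx mul_row_block mul_row_col ?trmx0 ?mul0mx ?add0r ?mulmx0 ?addr0.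
  rewrite add0r; apply.
  apply: contra w0 => /eqP h.
  have := congr1 (@dsubmx R 1 n 1) h.
  rewrite /L tr_block_mx mul_block_col col_mxKd !trmx0 !mul0mx !add0r trmx1 mul1mx.
  by move=> ->; rewrite linear0.
have [dS0 dSle dSor] := IH S SPD.
have Sii i : S i i = Q i i - c^-1 * (u 0 i)^+2.
  by rewrite !mxE big_ord1 !mxE expr2.
have QS i : 0 < S i i <= Q i i.
  rewrite (posdef_diag SPD) /= Sii gerBl mulr_ge0 // ?sqr_ge0 //.
  by rewrite invr_ge0 ltW.
have prodP : \prod_i P i i = c * \prod_i Q i i.
  rewrite big_ord_recl; congr (_ * _); apply: eq_bigr => i _.
  by rewrite /Q !mxE; congr (P _ _); apply: val_inj.
have SleQ : \prod_i S i i <= \prod_i Q i i.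
  by apply: ler_prod => i _; have /andP[/ltW -> ->] := QS i.
split.
- by rewrite detP mulr_gt0.
- by rewrite detP prodP ler_pM2l //; apply: le_trans dSle SleQ.
case: dSor => [lt|Sdiag].
  by left; rewrite detP prodP ltr_pM2l //; apply: lt_le_trans lt SleQ.
case: (eqVneq u 0) => [u0|un0].
  right.
  have SQ : S = Q by rewrite /S u0 mulmx0 scaler0 subr0.
  have e0 : (ord0 : 'I_(1+n)) = lshift n ord0 by apply: val_inj.
  have uz j : P ord0 (lift ord0 j) = 0.
    have : u 0 j = 0 by rewrite u0 mxE.
    by rewrite !mxE => <-; congr (P _ _); apply: val_inj.
  move=> i j ij.
  case: (unliftP ord0 i) ij => [i'|] ->; case: (unliftP ord0 j) => [j'|] -> ij.
  - have : Q i' j' = 0.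
      by rewrite -SQ; apply: Sdiag; apply: contra ij => /eqP ->.
    by rewrite !mxE => <-; congr (P _ _); apply: val_inj.
  - by rewrite -PT mxE uz.
  - by rewrite uz.
  - by rewrite eqxx in ij.
left.
have [i ui] : exists i, u 0 i != 0.
  apply/existsP; apply: contraNT un0 => /existsPn h.
  apply/eqP/matrixP => a j; rewrite ord1 [RHS]mxE.
  by move: (h j); rewrite negbK => /eqP.
rewrite detP prodP ltr_pM2l //; apply: le_lt_trans dSle _.
rewrite (bigD1 i) //= [X in _ < X](bigD1 i) //=.
have Y0 : 0 < \prod_(j | j != i) Q j j.
  by apply: prodr_gt0 => j _; have /andP[/lt_le_trans h /h] := QS j.
apply: (@le_lt_trans _ _ (S i i * \prod_(j | j != i) Q j j)).
  rewrite ler_pM2l; last by have /andP[] := QS i.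
  by apply: ler_prod => j _; have /andP[/ltW -> ->] := QS j.
rewrite ltr_pM2r // Sii gtrBl mulr_gt0 // ?invr_gt0 //.
by rewrite lt0r sqrf_eq0 ui sqr_ge0.
Qed.
Lemma a_props {R : realType} (lam b : R) : 0 < lam ->
  0 < a_coef lam b /\ a_coef lam b < 1 /\
  b * a_coef lam b * (1 - a_coef lam b) = (1 - a_coef lam b) - lam * a_coef lam b.
Proof.
move=> lam0.
set s := lam + 1 + b.
set r := Num.sqrt (s ^+ 2 - 4 * b).
have D0 : 0 <= s ^+ 2 - 4 * b.
  have -> : s ^+ 2 - 4 * b = (b + lam - 1) ^+ 2 + 4 * lam by rewrite /s; ring.
  by have := sqr_ge0 (b + lam - 1); lra.
have r0 : 0 <= r := sqrtr_ge0 _.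
have r2 : r ^+ 2 = s ^+ 2 - 4 * b by rewrite sqr_sqrtr.
have t2 : 2 < s + r.
  rewrite ltNge; apply/negP => h.
  have h1 : 0 <= (1 - b - lam - r) * (1 - b - lam + r).
    by apply: mulr_ge0; rewrite /s in h; lra.
  have h2 : s ^+ 2 - 4 * b = (b + lam - 1) ^+ 2 + 4 * lam by rewrite /s; ring.
  rewrite h2 in r2; nra.
have tn0 : s + r != 0 by apply/eqP => h; rewrite h in t2; lra.
have aE : a_coef lam b = 2 / (s + r).
  rewrite /a_coef -/s -/r; case: ifP => [/eqP b0|/negbT b0].
    have rE : r = lam + 1.
      rewrite /r /s b0 mulr0 subr0 addr0 sqrtr_sqr ger0_norm //; lra.
    rewrite rE /s b0 addr0; field; lra.
  apply/eqP; rewrite eqr_div ?mulf_neq0 //; last by rewrite (_ : (2:R) = 1 + 1) //; lra.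
have at2 : a_coef lam b * (s + r) = 2 by rewrite aE mulfVK.
split; first by rewrite aE divr_gt0 //; lra.
split.
  by rewrite aE ltr_pdivrMr; lra.
set a := a_coef lam b in at2 aE *.
set t := s + r in at2 tn0 t2 aE.
have e : (b * a * (1 - a) - ((1 - a) - lam * a)) * t ^+ 2 = 0.
  have -> : (b * a * (1 - a) - ((1 - a) - lam * a)) * t ^+ 2 =
     b * (a * t) * (t - a * t) - ((t - a * t) * t - lam * (a * t) * t) by ring.
  rewrite at2 /t.
  have -> : b * 2 * (s + r - 2) - ((s + r - 2) * (s + r) - lam * 2 * (s + r)) =
    - (r ^+ 2 - (s ^+ 2 - 4 * b)) + 2 * (lam + 1 + b - s) * (s + r) by ring.
  by rewrite r2 /s; ring.
apply/eqP; rewrite -subr_eq0; apply/eqP.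
move/eqP: e; rewrite mulf_eq0 => /orP[/eqP //|].
by rewrite expf_eq0 /= (negbTE tn0).
Qed.

Lemma ln_le_sub1 (R : realType) (y : R) : 0 < y -> ln y <= y - 1.
Proof. move=> y0; have := @le_ln1Dx R (y - 1); rewrite (addrC 1 (y - 1)) subrK; apply; lra. Qed.

Lemma ln_lt_sub1 (R : realType) (y : R) : 0 < y -> y != 1 -> ln y < y - 1.
Proof.
move=> y0 y1.
set q := Num.sqrt y.
have q0 : 0 < q by rewrite sqrtr_gt0.
have qy : q ^+ 2 = y by rewrite sqr_sqrtr // ltW.
have q1 : q != 1 by apply: contra y1 => /eqP h; rewrite -qy h expr1n.
have -> : ln y = ln q *+ 2 by rewrite -lnXn // qy.
apply: (@le_lt_trans _ _ ((q - 1) *+ 2)).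
  by rewrite lerMn2r /=; apply: ln_le_sub1.
have : 0 < (q - 1) ^+ 2 by rewrite lt0r sqrf_eq0 subr_eq0 q1 sqr_ge0.
rewrite -qy; nra.
Qed.

Lemma g_le {R : realType} (lam b x : R) : 0 < lam -> 0 < x < 1 ->
  let a := a_coef lam b in
  - b * x + ln x + lam * ln (1 - x) <= - b * a + ln a + lam * ln (1 - a) /\
  (x != a -> - b * x + ln x + lam * ln (1 - x) < - b * a + ln a + lam * ln (1 - a)).
Proof.
move=> lam0 /andP[x0 x1] a.
have [a0 [a1 foc]] := @a_props R lam b lam0; rewrite -/a in a0 a1 foc.
have l1 : ln x = ln (x / a) + ln a.
  by rewrite ln_div ?posrE // subrK.
have l2 : ln (1 - x) = ln ((1 - x) / (1 - a)) + ln (1 - a).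
  by rewrite ln_div ?posrE ?subr_gt0 // subrK.
have key : (x / a - 1) + lam * ((1 - x) / (1 - a) - 1) = b * (x - a).
  have an0 : a != 0 by rewrite gt_eqF.
  have an1 : 1 - a != 0 by rewrite gt_eqF ?subr_gt0.
  have -> : (x / a - 1) + lam * ((1 - x) / (1 - a) - 1) =
     (x - a) * ((1 - a) - lam * a) / (a * (1 - a)).
    by field; rewrite an0 an1.
  by rewrite -foc; field; rewrite an0 an1.
have h1 := @ln_le_sub1 R _ (divr_gt0 x0 a0).
have h2 : ln ((1 - x) / (1 - a)) <= (1 - x) / (1 - a) - 1.
  by apply: (@ln_le_sub1 R); rewrite divr_gt0 // subr_gt0.
rewrite l1 l2; split.
  nra.
move=> xa.
have h3 : ln (x / a) < x / a - 1.
  apply: (@ln_lt_sub1 R); first by rewrite divr_gt0.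
  apply: contra xa => /eqP h; apply/eqP.
  by move: h => /(congr1 (fun z => z * a)); rewrite divfK ?gt_eqF // mul1r.
nra.
Qed.

Lemma conj_posdef {R : realType} n (P G : 'M[R]_n) :
  posdef P -> G *m G^T = 1%:M -> posdef (G^T *m P *m G).
Proof.
move=> [PT PP] GG.
have GtG : G^T *m G = 1%:M := mulmx1C GG.
split.
  by rewrite !trmx_mul trmxK PT mulmxA.
move=> v v0.
have := PP (G *m v).
rewrite trmx_mul !mulmxA; apply.
apply: contra v0 => /eqP h.
by rewrite -[v]mul1mx -GtG -mulmxA h mulmx0.
Qed.

Lemma diag_posdef {R : realType} n (d : 'rV[R]_n) :
  (forall i, 0 < d 0 i) -> posdef (diag_mx d).
Proof.
move=> dp; split; first exact: tr_diag_mx.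
move=> v v0.
have [i vi] : exists i, v i 0 != 0.
  apply/existsP; apply: contraNT v0 => /existsPn h.
  apply/eqP/matrixP => j k; rewrite ord1 [RHS]mxE.
  by move: (h j); rewrite negbK => /eqP.
rewrite mul_mx_diag !mxE (bigD1 i) //=.
apply: ltr_wpDr.
  apply: sumr_ge0 => j _; rewrite !mxE -mulrA mulrCA mulr_ge0 ?(ltW (dp j)) //.
  by rewrite -expr2 sqr_ge0.
rewrite !mxE -mulrA mulrCA mulr_gt0 //.
by rewrite -expr2 lt0r sqrf_eq0 vi sqr_ge0.
Qed.

Lemma ln_prod {R : realType} (I : Type) (r : seq I) (F : I -> R) :
  (forall i, 0 < F i) -> ln (\prod_(i <- r) F i) = \sum_(i <- r) ln (F i).
Proof.
move=> Fp; elim: r => [|x r IH]; first by rewrite !big_nil ln1.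
rewrite !big_cons lnM ?IH // posrE //.
by apply: prodr_gt0.
Qed.

Lemma sum_lt {R : realType} n (F G : 'I_n -> R) :
  (forall i, F i <= G i) -> (exists i, F i < G i) ->
  \sum_i F i < \sum_i G i.
Proof.
move=> le [i lt]; rewrite (bigD1 i) //= [X in _ < X](bigD1 i) //=.
by apply: ltr_leD lt _; apply: ler_sum.
Qed.

Definition FX {R : realType} {n} (lam : R) (b : 'rV[R]_n) (X : 'M[R]_n) : R :=
  - \sum_i b 0 i * X i i + ln (\det X) + lam * ln (\det (1%:M - X)).

Lemma FX_sum {R : realType} {n} (lam : R) (b x : 'rV[R]_n) :
  \sum_i (- b 0 i * x 0 i + ln (x 0 i) + lam * ln (1 - x 0 i)) =
  - \sum_i b 0 i * x 0 i + \sum_i ln (x 0 i) + lam * \sum_i ln (1 - x 0 i).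
Proof.
by rewrite !big_split /= mulr_sumr -sumrN; congr (_ + _ + _); apply: eq_bigr => i _; rewrite mulNr.
Qed.

Lemma boundX {R : realType} n (lam : R) (b a : 'rV[R]_n) (X : 'M[R]_n) :
  0 < lam -> posdef X -> posdef (1%:M - X) ->
  (forall i, a 0 i = a_coef lam (b 0 i)) ->
  FX lam b X <= FX lam b (diag_mx a) /\
  (X != diag_mx a -> FX lam b X < FX lam b (diag_mx a)).
Proof.
move=> lam0 PX PY aE.
have [dX0 dXle dXor] := hadamard PX.
have [dY0 dYle _] := hadamard PY.
pose x := \row_i X i i.
have Yii i : (1%:M - X) i i = 1 - x 0 i by rewrite !mxE eqxx mulr1n.
have x01 i : 0 < x 0 i < 1.
  have := posdef_diag PY i; rewrite Yii subr_gt0 => ->.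
  by rewrite andbT mxE (posdef_diag PX).
have a01 i : 0 < a 0 i < 1.
  by have [h1 [h2 _]] := @a_props R lam (b 0 i) lam0; rewrite aE h1 h2.
have ga i := @g_le R lam (b 0 i) (x 0 i) lam0 (x01 i).
have Fd : FX lam b (diag_mx a) =
   \sum_i (- b 0 i * a 0 i + ln (a 0 i) + lam * ln (1 - a 0 i)).
  rewrite FX_sum /FX det_diag.
  have -> : 1%:M - diag_mx a = diag_mx (\row_i (1 - a 0 i)).
    apply/matrixP => i j; rewrite !mxE; case: eqP => _ //=.
    by rewrite mulr0n subr0.
  rewrite det_diag !ln_prod; last 2 first.
  - by move=> i; rewrite mxE subr_gt0; have /andP[] := a01 i.
  - by move=> i; have /andP[] := a01 i.
  congr (_ + _ + _); last by congr (_ * _); apply: eq_bigr => i _; rewrite mxE.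
  by congr (- _); apply: eq_bigr => i _; rewrite mxE eqxx mulr1n.
have prodXp : 0 < \prod_i X i i by apply: prodr_gt0 => i _; apply: posdef_diag.
have prodYp : 0 < \prod_i (1%:M - X) i i
  by apply: prodr_gt0 => i _; apply: posdef_diag.
have lnY : ln (\det (1%:M - X)) <= \sum_i ln (1 - x 0 i).
  rewrite -(@ln_prod R _ _ (fun i => 1 - x 0 i)); last first.
    by move=> i; rewrite subr_gt0; have /andP[] := x01 i.
  rewrite ler_ln ?posrE //.
  by apply: (le_trans dYle); rewrite le_eqVlt; apply/orP; left; apply/eqP;
     apply: eq_bigr => i _; rewrite Yii.
  by apply: prodr_gt0 => i _; rewrite subr_gt0; have /andP[] := x01 i.
have lnXE : \sum_i ln (x 0 i) = ln (\prod_i X i i).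
  rewrite ln_prod; last by move=> i; apply: posdef_diag.
  by apply: eq_bigr => i _; rewrite mxE.
have Fx : FX lam b X <= \sum_i (- b 0 i * x 0 i + ln (x 0 i) + lam * ln (1 - x 0 i)) /\
   (\det X < \prod_i X i i ->
     FX lam b X < \sum_i (- b 0 i * x 0 i + ln (x 0 i) + lam * ln (1 - x 0 i))).
  rewrite FX_sum /FX lnXE.
  have -> : \sum_i b 0 i * x 0 i = \sum_i b 0 i * X i i.
    by apply: eq_bigr => i _; rewrite mxE.
  have h1 : lam * ln (\det (1%:M - X)) <= lam * \sum_i ln (1 - x 0 i).
    by apply: ler_wpM2l; [exact: ltW | exact: lnY].
  split.
    by apply: lerD => //; apply: lerD => //; rewrite ler_ln ?posrE.
  move=> lt; apply: ltr_leD => //; apply: ler_ltD => //; rewrite ltr_ln ?posrE //.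
have Sle : \sum_i (- b 0 i * x 0 i + ln (x 0 i) + lam * ln (1 - x 0 i)) <=
           \sum_i (- b 0 i * a 0 i + ln (a 0 i) + lam * ln (1 - a 0 i)).
  by apply: ler_sum => i _; rewrite aE; have [] := ga i.
rewrite Fd; split; first exact: le_trans Fx.1 Sle.
move=> Xa.
case: dXor => [lt|Xdiag]; first exact: lt_le_trans (Fx.2 lt) Sle.
apply: le_lt_trans Fx.1 _.
apply: sum_lt; first by move=> i; rewrite aE; have [] := ga i.
have [i xi] : exists i, x 0 i != a 0 i.
  apply/existsP; apply: contraNT Xa => /existsPn h.
  apply/eqP/matrixP => i j; rewrite mxE.
  case: (eqVneq i j) => [<-|ij]; last by rewrite mulr0n Xdiag.
  by move: (h i); rewrite negbK mxE mulr1n => /eqP.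
by exists i; rewrite aE; apply: (ga i).2; rewrite -aE.
Qed.

Lemma one_sub_diag {R : realType} n (a : 'rV[R]_n) :
  1%:M - diag_mx a = diag_mx (\row_i (1 - a 0 i)).
Proof.
apply/matrixP => i j; rewrite !mxE; case: eqP => _ //=.
by rewrite mulr0n subr0.
Qed.

Theorem theorem5 (R : realType) (n : nat) (lam : R)
  (KU0 KV0 S1 S2 H : 'M[R]_n) (b : 'rV[R]_n) :
  1 < lam ->
  posdef KU0 -> posdef KV0 -> posdef S1 -> posdef S2 ->
  KU0 + KV0 = 1%:M ->
  let A := KV0 *m invmx (1%:M + S2) in
  let W1 := KV0 - KV0 *m invmx (1%:M + S2) *m KV0 in
  let B := KU0 *m invmx (KU0 + S1) in
  let W2 := KU0 - KU0 *m invmx (KU0 + S1) *m KU0 in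
  let DU := invmx W2 - invmx W2 *m B - B^T *m invmx W2 + B^T *m invmx W2 *m B in
  let DV := invmx W1 - A^T *m invmx W1 - invmx W1 *m A in
  H *m H^T = 1%:M ->
  DU - lam *: DV = H *m diag_mx b *m H^T ->
  let Kopt := H *m diag_mx (\row_i a_coef lam (b 0 i)) *m H^T in
  feasible Kopt /\
  (forall K : 'M[R]_n, feasible K -> objective lam DU DV K <= objective lam DU DV Kopt) /\
  (forall K : 'M[R]_n, feasible K -> K != Kopt ->
     objective lam DU DV K < objective lam DU DV Kopt).
Proof.
move=> lam1 _ _ _ _ _ A W1 B W2 DU DV HH Hdec Kopt.
have lam0 : 0 < lam := lt_trans ltr01 lam1.
have HtH : H^T *m H = 1%:M := mulmx1C HH.
pose a : 'rV[R]_n := \row_i a_coef lam (b 0 i).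
have KoptE : Kopt = H *m diag_mx a *m H^T by [].
have aE i : a 0 i = a_coef lam (b 0 i) by rewrite mxE.
have a01 i : 0 < a 0 i < 1.
  by have [h1 [h2 _]] := @a_props R lam (b 0 i) lam0; rewrite aE h1 h2.
have detHH : \det H^T * \det H = 1 by rewrite -det_mulmx HtH det1.
have conjX K : H^T *m (1%:M - K) *m H = 1%:M - H^T *m K *m H.
  by rewrite mulmxBr mulmxBl mulmx1 HtH.
have detC K : \det (H^T *m K *m H) = \det K.
  by rewrite !det_mulmx mulrAC detHH mul1r.
have objE K : objective lam DU DV K = FX lam b (H^T *m K *m H) - lam * \tr DV.
  rewrite /objective /FX -conjX !detC.
  have trE : \tr (DU *m K) = \tr ((DU - lam *: DV) *m K) + lam * \tr (DV *m K).
    by rewrite mulmxBl -scalemxAl raddfB /= mxtraceZ subrK.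
  have tr2 : \tr (DV *m (1%:M - K)) = \tr DV - \tr (DV *m K).
    by rewrite mulmxBr mulmx1 raddfB.
  have tr3 : \tr ((DU - lam *: DV) *m K) = \sum_i b 0 i * (H^T *m K *m H) i i.
    rewrite Hdec -!mulmxA mxtrace_mulC !mulmxA /mxtrace.
    by apply: eq_bigr => i _; rewrite -!mulmxA mul_diag_mx mxE.
  rewrite trE tr2 tr3; ring.
have XoptE : H^T *m Kopt *m H = diag_mx a.
  by rewrite KoptE !mulmxA HtH mul1mx -mulmxA HtH mulmx1.
have HtHT : H^T *m H^T^T = 1%:M by rewrite trmxK.
have feasX K : feasible K ->
    posdef (H^T *m K *m H) /\ posdef (1%:M - H^T *m K *m H).
  move=> [PK PY]; split; first exact: conj_posdef.
  by rewrite -conjX; apply: conj_posdef.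
have fKopt : feasible Kopt.
  split.
    have := @conj_posdef R n _ H^T (@diag_posdef R n a (fun i => proj1 (andP (a01 i)))) HtHT.
    by rewrite trmxK KoptE.
  have PD1 : posdef (diag_mx (\row_i (1 - a 0 i))).
    by apply: (@diag_posdef R n) => i; rewrite mxE subr_gt0; have /andP[] := a01 i.
  have := @conj_posdef R n _ H^T PD1 HtHT.
  by rewrite trmxK -one_sub_diag mulmxBr mulmx1 mulmxBl HH -KoptE.
split => //.
split.
  move=> K fK; rewrite !objE XoptE lerD2r.
  by have [PX PY] := feasX K fK; have [] := @boundX R n lam b a _ lam0 PX PY aE.
move=> K fK KK; rewrite !objE XoptE ltrD2r.
have [PX PY] := feasX K fK; have [_] := @boundX R n lam b a _ lam0 PX PY aE; apply.
apply: contra KK => /eqP h; apply/eqP.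
by rewrite KoptE -h !mulmxA HH mul1mx -mulmxA HH mulmx1.
Qed.
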